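(* Let $\Pi$ be a tight $\mathrm{LP}^{\mathrm{MLN}}$ program such that $\mathrm{SM}'[\Pi]$ is not empty. Then $\Pi$ (under the $\mathrm{LP}^{\mathrm{MLN}}$ semantics) and its completion $\mathit{Comp}(\Pi)$ (under the MLN semantics) have the same probability distribution over all interpretations, i.e. $P_\Pi(I)=P_{\mathit{Comp}(\Pi)}(I)$ for every interpretation $I$.
   Context: Signature $\sigma$ with no function constants of positive arity; interpretations are sets of ground atoms. A formula is negative if every occurrence of every atom is in the scope of negation. A rule has the form $A\leftarrow B\wedge N$ ($A$ a possibly empty disjunction of atoms $A_1\vee\dots\vee A_k$, $B$ a conjunction of atoms, $N$ a negative formula; $B\wedge N$ is its body), identified with $B\wedge N\rightarrow A$. For a ground program $\Pi$, the reduct $\Pi^I$ consists of $A\leftarrow B$ for rules $A\leftarrow B\wedge N$ with $I\models N$; $I$ is a stable model of $\Pi$ if it is a minimal model of $\Pi^I$. An $\mathrm{LP}^{\mathrm{MLN}}$ program $\Pi$ is a finite set of weighted rules $w:R$ ($w$ real, soft, or the symbol $\alpha$, hard), identified with its ground instance. $\overline{\Pi}$ drops weights; $\Pi_I=\{w:R\in\Pi\mid I\models R\}$; $\Pi^{\rm hard},\Pi^{\rm soft}$ are its hard and soft rules. $\mathrm{SM}[\Pi]=\{I\mid I$ stable model of $\overline{\Pi_I}\}$; $W_\Pi(I)=\exp(\sum_{w:R\in\Pi_I}w)$ if $I\in\mathrm{SM}[\Pi]$, else $0$; $P_\Pi(I)=\lim_{\alpha\to\infty}W_\Pi(I)/\sum_{J\in\mathrm{SM}[\Pi]}W_\Pi(J)$.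 $\mathrm{SM}'[\Pi]$ is the set of $I$ that are stable models of $\overline{\Pi_I}$ and satisfy $\overline{\Pi^{\rm hard}}$. $\Pi$ is tight if the positive dependency graph of $\overline{\Pi}$ (vertices: ground atoms; an edge from each atom in $A$ to each atom in $B$ for every rule $A\leftarrow B\wedge N$) is acyclic. An MLN is a finite set of weighted formulas $w:F$ ($w$ real or $\alpha$); $W_{\mathbb{L}}(I)=\exp(\sum w)$ over the formulas of $\mathbb{L}$ satisfied by $I$, and $P_{\mathbb{L}}(I)=\lim_{\alpha\to\infty}W_{\mathbb{L}}(I)/\sum_J W_{\mathbb{L}}(J)$ over all interpretations $J$. $\mathit{Comp}(\Pi)$ is the MLN consisting of all $w:R$ in $\Pi$ (with $R$ read as the formula $B\wedge N\rightarrow A$) together with, for each ground atom $A$, the hard formula $\alpha:\ A\rightarrow\bigvee (\mathit{Body}\wedge\bigwedge_{A'\in\{A_1,\dots,A_k\}\setminus\{A\}}\neg A')$, the disjunction ranging over all rules $w: A_1\vee\dots\vee A_k\leftarrow\mathit{Body}$ in $\Pi$ with $A\in\{A_1,\dots,A_k\}$. *)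

(* Defs.v *)
From HB Require Import structures.
From mathcomp Require Import all_boot all_order all_algebra.
From mathcomp Require Import all_classical all_reals.
From mathcomp Require Import topology normedtype sequences.
From mathcomp.analysis Require Import exp.
Set Implicit Arguments. Unset Strict Implicit. Unset Printing Implicit Defensive.
Import Order.TTheory GRing.Theory Num.Theory.
Import numFieldNormedType.Exports.
Local Open Scope ring_scope.

Section LPMLN.
Variable A : finType.

Inductive form :=
| FAtom of A | FTop | FBot | FNeg of form
| FAnd of form & form | FOr of form & form | FImp of form & form.

Fixpoint sat (I : {set A}) (f : form) : bool :=
  match f with
  | FAtom a => a \in I
  | FTop => true | FBot => false
  | FNeg g => ~~ sat I g
  | FAnd g h => sat I g && sat I h
  | FOr g h => sat I g || sat I h
  | FImp g h => sat I g ==> sat I h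
  end.

Fixpoint negative (f : form) : bool :=
  match f with
  | FAtom _ => false
  | FTop | FBot | FNeg _ => true
  | FAnd g h | FOr g h | FImp g h => negative g && negative h
  end.

Definition bigand (s : seq form) : form := foldr FAnd FTop s.
Definition bigor (s : seq form) : form := foldr FOr FBot s.

(* ground rule  A_1 v ... v A_k <- B /\ N  *)
Record rule := Rule { head : seq A; pbody : seq A; nbody : form }.

Definition body_form (r : rule) : form :=
  FAnd (bigand (map FAtom (pbody r))) (nbody r).
Definition rule_form (r : rule) : form :=
  FImp (body_form r) (bigor (map FAtom (head r))).
Definition sat_rule (I : {set A}) (r : rule) : bool := sat I (rule_form r).

(* positive (reduct) rules: head <- positive body *)
Definition prule := (seq A * seq A)%type.
Definition sat_prule (I : {set A}) (r : prule) : bool :=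
  all (fun b => b \in I) r.2 ==> has (fun a => a \in I) r.1.
Definition reduct (P : seq rule) (I : {set A}) : seq prule :=
  [seq (head r, pbody r) | r <- P & sat I (nbody r)].
Definition model_pos (P : seq prule) (J : {set A}) : bool := all (sat_prule J) P.
Definition stable (P : seq rule) (I : {set A}) : Prop :=
  model_pos (reduct P I) I /\
  forall J : {set A}, J \proper I -> ~~ model_pos (reduct P I) J.

Variable R : realType.

Inductive weight := Soft of R | Hard.
Definition wval (alpha : R) (w : weight) : R :=
  match w with Soft x => x | Hard => alpha end.
Definition is_hard (w : weight) : bool := if w is Hard then true else false.

Definition program := seq (weight * rule).
Definition unweight (P : program) : seq rule := map snd P.
Definition prog_sat (P : program) (I : {set A}) : program :=
  [seq wr <- P | sat_rule I wr.2].

Definition SM (P : program) (I : {set A}) : Prop := stable (unweight (prog_sat P I)) I.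
Definition SM' (P : program) (I : {set A}) : Prop :=
  SM P I /\ all (fun wr => sat_rule I wr.2) [seq wr <- P | is_hard wr.1].

Definition W_lp (alpha : R) (P : program) (I : {set A}) : R :=
  if `[< SM P I >] then expR (\sum_(wr <- prog_sat P I) wval alpha wr.1) else 0.
Definition Z_lp (alpha : R) (P : program) : R := \sum_(J : {set A}) W_lp alpha P J.
(* P_Pi(I) is the limit of this quantity as alpha -> +oo *)
Definition Pr_lp_alpha (P : program) (I : {set A}) (alpha : R) : R :=
  W_lp alpha P I / Z_lp alpha P.

Definition dep_edge (P : program) : rel A :=
  fun a b => has (fun wr => (a \in head wr.2) && (b \in pbody wr.2)) P.
Definition tight (P : program) : Prop :=
  forall a b, dep_edge P a b -> ~~ connect (dep_edge P) b a.

Definition mln := seq (weight * form).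
Definition W_mln (alpha : R) (L : mln) (I : {set A}) : R :=
  expR (\sum_(wf <- L | sat I wf.2) wval alpha wf.1).
Definition Z_mln (alpha : R) (L : mln) : R := \sum_(J : {set A}) W_mln alpha L J.
Definition Pr_mln_alpha (L : mln) (I : {set A}) (alpha : R) : R :=
  W_mln alpha L I / Z_mln alpha L.

Definition comp_atom (P : program) (a : A) : weight * form :=
  (Hard, FImp (FAtom a)
     (bigor [seq FAnd (body_form wr.2)
                 (bigand [seq FNeg (FAtom a') | a' <- head wr.2 & a' != a])
            | wr <- P & a \in head wr.2])).
Definition Comp (P : program) : mln :=
  [seq (wr.1, rule_form wr.2) | wr <- P] ++ [seq comp_atom P a | a <- enum A].

End LPMLN.

(* Main.v *)
Require Import Defs.
From HB Require Import structures.
From mathcomp Require Import all_boot all_order all_algebra.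
From mathcomp Require Import all_classical all_reals.
From mathcomp Require Import topology normedtype sequences.
From mathcomp.analysis Require Import exp.
From mathcomp Require Import ring lra.
Import Order.TTheory GRing.Theory Num.Theory.
Import numFieldNormedType.Exports.
Local Open Scope classical_set_scope.
Local Open Scope ring_scope.

HB.instance Definition _ (A : finType) := gen_eqMixin (rule A).
HB.instance Definition _ (R : realType) := gen_eqMixin (weight R).

Lemma sat_bigand (A : finType) (I : {set A}) s : sat I (bigand s) = all (sat I) s.
Proof. by elim: s => //= f s ->. Qed.
Lemma sat_bigor (A : finType) (I : {set A}) s : sat I (bigor s) = has (sat I) s.
Proof. by elim: s => //= f s ->. Qed.
Lemma sat_body (A : finType) (I : {set A}) r :
  sat I (body_form r) = all (fun b => b \in I) (pbody r) && sat I (nbody r).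
Proof. by rewrite /= sat_bigand all_map. Qed.
Lemma sat_ruleE (A : finType) (I : {set A}) r :
  sat_rule I r = (all (fun b => b \in I) (pbody r) && sat I (nbody r)) ==> has (fun a => a \in I) (Defs.head r).
Proof. by rewrite /sat_rule /rule_form /= sat_bigand sat_bigor all_map has_map. Qed.

Lemma sat_comp (R : realType) (A : finType) (P : program A R) (I : {set A}) a :
  sat I (comp_atom P a).2 <->
  (a \in I -> exists2 wr, wr \in P &
     [/\ a \in Defs.head wr.2, sat I (body_form wr.2) & forall a', a' \in Defs.head wr.2 -> a' != a -> a' \notin I]).
Proof.
rewrite [sat _ _]/= sat_bigor has_map; split.
- move=> /implyP H /H /hasP [wr]; rewrite mem_filter => /andP [ah wrP].
  rewrite [preim _ _ _]/= => /andP [sb al].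
  exists wr => //; split => //; move=> a' a'h a'a.
  move: al; rewrite sat_bigand all_map => /allP al.
  by have := al a'; rewrite mem_filter a'h a'a /=; apply.
- move=> H; apply/implyP => /H [wr wrP [ah sb al]].
  apply/hasP; exists wr; first by rewrite mem_filter ah.
  rewrite [preim _ _ _]/=; apply/andP; split => //; rewrite sat_bigand all_map; apply/allP => a'.
  by rewrite mem_filter => /andP [a'a a'h] /=; apply: al.
Qed.

Definition reach {A : finType} (e : rel A) (a : A) : {set A} := finset (connect e a).

Lemma reach_lt (A : finType) (e : rel A) a b :
  e a b -> ~~ connect e b a -> (#|reach e b| < #|reach e a|)%N.
Proof.
move=> eab nba; apply: proper_card; apply/properP; split.
  apply/fintype.subsetP => x; rewrite !inE => /(connect_trans (connect1 eab)); done.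
by exists a; rewrite !inE ?connect0.
Qed.

Lemma SM_comp (R : realType) (A : finType) (P : program A R) (I : {set A}) :
  tight P -> SM P I <-> (forall a, sat I (comp_atom P a).2).
Proof.
move=> tP; split.
- move=> [Im Imin] a; apply/sat_comp => aI.
  apply: contrapT => Hns.
  have := Imin _ (properD1 aI); apply/negP/negPn.
  apply/allP => pr /mapP [r]; rewrite mem_filter => /andP [sn].
  move=> /mapP [wr]; rewrite mem_filter => /andP [swr wrP] Er Epr; subst r pr.
  rewrite /sat_prule /=; apply/implyP => bJ.
  have bI : all (fun b => b \in I) (pbody wr.2).
    by apply/allP => b /(allP bJ); rewrite inE => /andP[].
  apply: contrapT => hJ; apply: Hns; exists wr => //; split.
  + move: swr; rewrite sat_ruleE bI sn /= => /hasP [x xh xI].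
    case: (eqVneq x a) => [<- //|xa]; case: hJ; apply/hasP; exists x => //.
    by rewrite !inE xa.
  + by rewrite sat_body bI.
  + move=> a' a'h a'a; apply/negP => a'I; apply: hJ; apply/hasP; exists a' => //.
    by rewrite !inE a'a.
- move=> Hc; split.
  + apply/allP => pr /mapP [r]; rewrite mem_filter => /andP [sn].
    move=> /mapP [wr]; rewrite mem_filter => /andP [swr wrP] Er Epr; subst r pr.
    by move: swr; rewrite sat_ruleE /sat_prule /= sn andbT.
  + move=> J /properP [JI [x0 x0I x0J]]; apply/negP => Jm.
    pose D := I :\: J.
    have x0D : x0 \in D by rewrite /D !inE x0J.
    case: (arg_minnP (fun x => #|reach (dep_edge P) x|) x0D) => a aD amin.
    have aD2 : a \in I :\: J by []. 
    have aI : a \in I by move: aD2; rewrite !inE => /andP[].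
    have aJ : a \notin J by move: aD2; rewrite !inE => /andP[].
    have [wr wrP [ah sb al]] := (iffLR (sat_comp _ _ P I a) (Hc a)) aI.
    move: sb; rewrite sat_body => /andP [bI sn].
    have swr : sat_rule I wr.2 by rewrite sat_ruleE bI sn /=; apply/hasP; exists a.
    have inred : (Defs.head wr.2, pbody wr.2) \in reduct (unweight (prog_sat P I)) I.
      apply/mapP; exists wr.2 => //; rewrite mem_filter sn /=.
      by apply/mapP; exists wr => //; rewrite mem_filter swr.
    have := allP Jm _ inred; rewrite /sat_prule /=.
    have -> : all (fun b => b \in J) (pbody wr.2).
      apply/allP => b bb; apply: contrapT => /negP bJ.
      have bD : b \in D by rewrite /D !inE bJ (allP bI).
      have eab : dep_edge P a b by apply/hasP; exists wr => //; rewrite ah bb.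
      have := amin _ bD; rewrite leqNgt (reach_lt _ _ _ _ eab (tP _ _ eab)) //.
    move=> /hasP [x xh xJ]; case: (eqVneq x a) => [xa|xa].
      by move: aJ; rewrite -xa xJ.
    by move: (al x xh xa); rewrite (fintype.subsetP JI _ xJ).
Qed.
Lemma cvg_exprn (R : realType) (f : R -> R) (l : R) n :
  f a @[a --> +oo] --> l -> f a ^+ n @[a --> +oo] --> l ^+ n.
Proof.
move=> fl; elim: n => [|n IH].
  under eq_cvg do rewrite expr0. rewrite expr0; exact: cvg_cst.
under eq_cvg do rewrite exprS. rewrite exprS; exact: cvgM.
Qed.

Lemma cvg_expG (R : realType) (c : R) (k K : nat) : (k <= K)%N ->
  expR (c + a * (k%:R - K%:R)) @[a --> +oo] --> (if k == K then expR c else 0).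
Proof.
move=> kK; case: eqP => [->|/eqP kK'].
  under eq_cvg do rewrite subrr mulr0 addr0. exact: cvg_cst.
have kK2 : (k < K)%N by rewrite ltn_neqAle kK' kK.
have E : forall a : R, expR (c + a * (k%:R - K%:R)) = expR c * expR (- a) ^+ (K - k).
  move=> a; rewrite -expRM_natl -expRD; congr expR.
  rewrite natrB ?(ltnW kK2) //; ring.
under eq_cvg do rewrite E.
have H0 : expR c * 0 ^+ (K - k) = 0 :> R by rewrite expr0n subn_eq0 leqNgt kK2 mulr0.
suff H : expR c * expR (- a) ^+ (K - k) @[a --> +oo] --> expR c * 0 ^+ (K - k) by rewrite H0 in H.
apply: cvgM; first exact: cvg_cst.
apply: cvg_exprn; exact: cvgr_expR.
Qed.

Lemma ratio_cvg (R : realType) (T : finType) (f : T -> R -> R) (L : T -> R)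
   (e : R -> R) (W : R -> T -> R) (I : T) :
  (forall a J, W a J = f J a * e a) -> (forall a, e a != 0) ->
  (forall J, f J a @[a --> +oo] --> L J) -> \sum_J L J != 0 ->
  (W a I / \sum_J W a J) @[a --> +oo] --> L I / \sum_J L J.
Proof.
move=> WE e0 fL L0.
have E : forall a, W a I / \sum_J W a J = f I a * (\sum_J f J a)^-1.
  move=> a; rewrite WE; under eq_bigr do rewrite WE.
  by rewrite -mulr_suml invfM mulrACA divff // mulr1.
under eq_cvg do rewrite E.
apply: cvgM => //; apply: cvgV => //.
apply: cvg_big => //; exact: add_continuous.
Qed.

Definition softv {R : realType} (w : weight R) : R := if w is Soft x then x else 0.
Definition hcount {R : realType} {A : finType} (P : program A R) : nat :=
  count (fun wr => is_hard wr.1) P.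
Definition sI {R : realType} {A : finType} (P : program A R) (J : {set A}) : R :=
  \sum_(wr <- prog_sat P J) softv wr.1.
Definition hI {R : realType} {A : finType} (P : program A R) (J : {set A}) : nat :=
  hcount (prog_sat P J).
Definition cI {R : realType} {A : finType} (P : program A R) (J : {set A}) : nat :=
  count (fun a => sat J (comp_atom P a).2) (enum A).

Lemma sum_wval (R : realType) (A : finType) (a : R) (s : program A R) :
  \sum_(wr <- s) wval a wr.1 = \sum_(wr <- s) softv wr.1 + a * (hcount s)%:R.
Proof.
elim: s => [|[w r] s IH]; first by rewrite !big_nil mulr0 addr0.
rewrite !big_cons IH /hcount /=; case: w => [x|] /=.
  by rewrite add0n /softv /=; ring.
rewrite add1n -addn1 natrD /softv /=; ring.
Qed.

Lemma sum_const (R : realType) (T : Type) (p : pred T) (s : seq T) (c : R) :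
  \sum_(x <- s | p x) c = c * (count p s)%:R.
Proof.
elim: s => [|x s IH]; first by rewrite big_nil mulr0.
rewrite big_cons IH /=; case: (p x) => /=; last by rewrite add0n.
by rewrite add1n -addn1 natrD; ring.
Qed.

Lemma addn_eq_le (k K m M : nat) : (k <= K)%N -> (m <= M)%N ->
  (k + m == K + M) = (k == K) && (m == M).
Proof.
move=> kK mM; case: (eqVneq k K) => [->|kK'] /=; first by rewrite eqn_add2l.
apply/negbTE; rewrite neq_ltn; apply/orP; left.
by apply: leq_ltn_trans (leq_add (leqnn k) mM) _; rewrite ltn_add2r ltn_neqAle kK' kK.
Qed.

Theorem theorem3 (R : realType) (A : finType) (Pi : program A R) :
  all (fun wr => negative (nbody wr.2)) Pi ->
  tight Pi ->
  (exists I : {set A}, SM' Pi I) ->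
  forall I : {set A}, exists p : R,
    Pr_lp_alpha Pi I alpha @[alpha --> +oo] --> p /\
    Pr_mln_alpha (Comp Pi) I alpha @[alpha --> +oo] --> p.
Proof.
move=> _ tP [I0 [SM0 hard0]] I.
pose H := hcount Pi; pose n := #|A|.
pose L J := if `[< SM Pi J >] && (hI Pi J == H) then expR (sI Pi J) else 0.
have hle J : (hI Pi J <= H)%N.
  by rewrite /hI /hcount /H /prog_sat count_filter; apply: sub_count => x /andP[].
have cle J : (cI Pi J <= n)%N by rewrite /cI /n cardE count_size.
have cE J : (cI Pi J == n) = `[< SM Pi J >].
  rewrite /cI /n cardE -all_count; apply/idP/asboolP.
    by move=> /allP al; apply/(SM_comp _ _ Pi J tP) => a; apply: al; rewrite mem_enum.
  by move=> /(SM_comp _ _ Pi J tP) al; apply/allP => a _; apply: al.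
have hI0 : hI Pi I0 = H.
  rewrite /hI /hcount /H /prog_sat count_filter; apply: eq_in_count => wr wrP /=.
  case hw : (is_hard wr.1) => //=.
  by apply: (allP hard0); rewrite mem_filter hw.
have L0 : \sum_J L J != 0.
  rewrite (bigD1 I0) //= {1}/L hI0 eqxx andbT asboolT //.
  have : 0 <= \sum_(J | J != I0) L J.
    by apply: sumr_ge0 => J _; rewrite /L; case: ifP => _ //; apply: expR_ge0.
  have := expR_gt0 (sI Pi I0); move=> h1 h2; apply: lt0r_neq0; lra.
exists (L I / \sum_J L J); split.
- apply: (@ratio_cvg R _ (fun J a => if `[< SM Pi J >] then expR (sI Pi J + a * ((hI Pi J)%:R - H%:R)) else 0)
     L (fun a => expR (a * H%:R)) (fun a J => W_lp a Pi J)).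
  + move=> a J; rewrite /W_lp; case: asboolP => _; last by rewrite mul0r.
    rewrite sum_wval -expRD; congr expR; rewrite /sI /hI; ring.
  + by move=> a; rewrite gt_eqF ?expR_gt0.
  + move=> J; rewrite /L; case: asboolP => _ /=; last exact: cvg_cst.
    exact: cvg_expG.
  + exact: L0.
- apply: (@ratio_cvg R _ (fun J a => expR (sI Pi J + a * ((hI Pi J + cI Pi J)%:R - (H + n)%:R)))
     L (fun a => expR (a * (H + n)%:R)) (fun a J => W_mln a (Comp Pi) J)).
  + move=> a J; rewrite /W_mln /Comp big_cat /= !big_map -big_filter sum_wval.
    rewrite sum_const -expRD; congr expR; rewrite /sI /hI /cI !natrD.
    have -> : [seq i <- Pi | sat J (i.1, rule_form i.2).2] = prog_sat Pi J by [].
    rewrite -enumT; ring.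
  + by move=> a; rewrite gt_eqF ?expR_gt0.
  + move=> J; rewrite /L -cE.
    have -> : (cI Pi J == n) && (hI Pi J == H) = (hI Pi J + cI Pi J == H + n).
      by rewrite addn_eq_le // andbC.
    by apply: cvg_expG; apply: leq_add.
  + exact: L0.
Qed.
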